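(* Let $n$ be a positive integer, $0\le m\le\lfloor n/2\rfloor$ and $0\le k\le m$. Let $T_k$ be the Young tableau of shape $(n-k,k)$ whose first row contains $1,2,\dots,n-k$ and whose second row contains $n-k+1,\dots,n$ (so its columns of length two are $\{i,n-k+i\}$, $1\le i\le k$). Let $R(T_k)\subseteq S_n$ be the subgroup of permutations of $\{1,\dots,n\}$ preserving each row of $T_k$ as a set, and $C(T_k)\subseteq S_n$ the subgroup preserving each column as a set. Let $\Omega=\{n-m+1,\dots,n\}$. For $p\in R(T_k)$ and $q\in C(T_k)$ put $$V=\{\,i \mid i\le k,\ q(i)\ne i\,\},\qquad W=\{\,i\in\Omega \mid p(i)\notin \Omega\cup V\,\}.$$ Then the cardinality of $\Omega\cap (qp)(\Omega)$ equals $m-\#V-\#W$, where $(qp)(\Omega)=q(p(\Omega))$ is the image of the set $\Omega$.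
   Context: $\#X$ denotes the cardinality of a finite set $X$. Permutations act on $\{1,\dots,n\}$ and the product $qp$ means $q\circ p$ (first $p$, then $q$). *)

(* Defs.v *)
From mathcomp Require Import all_boot all_order all_algebra all_fingroup.
Set Implicit Arguments. Unset Strict Implicit. Unset Printing Implicit Defensive.

(* Convention: the point i in {1,...,n} is represented by the ordinal
   (i-1 : 'I_n).  So "value v" of an ordinal denotes the integer v+1. *)

Definition row1 (n k : nat) : {set 'I_n} := [set x : 'I_n | x < n - k].
Definition row2 (n k : nat) : {set 'I_n} := [set x : 'I_n | n - k <= x].

Definition colOf (n k : nat) (x : 'I_n) : nat :=
  if n - k <= x then x - (n - k) else x.

Definition colset (n k j : nat) : {set 'I_n} := [set x : 'I_n | colOf k x == j].

Definition RT (n k : nat) : {set {perm 'I_n}} :=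
  [set p : {perm 'I_n} | (p @: row1 n k == row1 n k) && (p @: row2 n k == row2 n k)].

Definition CT (n k : nat) : {set {perm 'I_n}} :=
  [set q : {perm 'I_n} | [forall j : 'I_n, (j < n - k) ==> (q @: colset n k j == colset n k j)]].

Definition Omega (n m : nat) : {set 'I_n} := [set x : 'I_n | n - m <= x].

Definition Vset (n k : nat) (q : {perm 'I_n}) : {set 'I_n} :=
  [set i : 'I_n | (i < k) && (q i != i)].

Definition Wset (n m k : nat) (p q : {perm 'I_n}) : {set 'I_n} :=
  [set i in Omega n m | p i \notin Omega n m :|: Vset k q].

(* Main.v *)
Require Import Defs.
From mathcomp Require Import all_boot all_order all_algebra all_fingroup.
From mathcomp Require Import zify.

Lemma card_Omega (n m : nat) : m <= n -> #|Omega n m| = m.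
Proof.
move=> hm.
have hf : forall i : 'I_m, n - m + i < n by move=> i; have := ltn_ord i; lia.
have -> : Omega n m = [set Ordinal (hf i) | i in 'I_m].
  apply/setP => x; rewrite inE; apply/idP/imsetP.
    move=> hx; have hi : x - (n - m) < m by have := ltn_ord x; lia.
    exists (Ordinal hi) => //; apply/val_inj => /=; lia.
  by case=> i _ ->; rewrite /= leq_addr.
rewrite card_imset ?card_ord // => i j /(congr1 (@nat_of_ord n)) /= h; apply/val_inj => /=; move: h; have := ltn_ord i; have := ltn_ord j; lia.
Qed.

Theorem lemma2 (n m k : nat) (p q : {perm 'I_n}) :
  0 < n -> m <= n./2 -> k <= m ->
  p \in RT n k -> q \in CT n k ->
  (#|Omega n m :&: (q @: (p @: Omega n m))|%:Z =
     m%:Z - #|Vset k q|%:Z - #|Wset m k p q|%:Z)%R.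
Proof.
move=> n0 hm hk hp hq.
have hmn : m + m <= n by move: hm; rewrite -{2}(odd_double_half n) -addnn; case: (odd n) => /=; lia.
have Hcol : forall x : 'I_n, colOf k (q x) = colOf k x.
  move=> x.
  have hj : colOf k x < n by rewrite /colOf; case: ifP; have := ltn_ord x; lia.
  move: hq; rewrite inE => /forallP /(_ (Ordinal hj)) /implyP.
  have hj2 : Ordinal hj < n - k by rewrite /= /colOf; case: ifP; have := ltn_ord x; lia.
  move=> /(_ hj2) /eqP Hc.
  have : q x \in colset n k (Ordinal hj) by rewrite -Hc; apply: imset_f; rewrite inE.
  by rewrite inE => /eqP.
have Hq : forall x : 'I_n, (nat_of_ord (q x) = nat_of_ord x) \/ (x < k /\ nat_of_ord (q x) = x + (n - k))
      \/ (n - k <= x /\ nat_of_ord (q x) + (n - k) = x).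
  move=> x; have := Hcol x; have := ltn_ord x; have := ltn_ord (q x); rewrite /colOf.
  case: ifP => h1; case: ifP => h2; lia.
have qinj : forall a b : 'I_n, nat_of_ord (q a) = nat_of_ord (q b) -> a = b.
  by move=> a b /val_inj /perm_inj.
set O := Omega n m.
set A := p @: O.
set V := Vset k q.
set B := A :&: [set x | q x \in O].
have E1 : O :&: q @: A = q @: B.
  apply/setP => x; rewrite inE; apply/andP/imsetP.
    case=> hx /imsetP [a ha hxa]; exists a => //; rewrite in_setI ha in_set -hxa; by move: hx; rewrite /O !inE.
  case=> a; rewrite !inE => /andP [ha hqa] ->; split => //; exact: imset_f.
have row2A : forall x : 'I_n, n - k <= x -> x \in A.
  move=> x hx; move: hp; rewrite inE => /andP [_ /eqP H2].
  have : x \in p @: row2 n k by rewrite H2 inE.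
  move/imsetP => [y hy ->]; apply: imset_f; move: hy; rewrite !inE; lia.
set X := O :|: V.
have E2 : A :&: X = B :|: q @: V.
  apply/setP => x; rewrite !inE.
  have hx := ltn_ord x.
  case: (boolP (x \in q @: V)) => hxV.
  - move: hxV => /imsetP [y]; rewrite inE => /andP [hy hqy] ->.
    have hv : nat_of_ord (q y) = y + (n - k).
      case: (Hq y) => [h|[[_ h]|[h _]]] //; last lia.
      by case/eqP: hqy; apply/val_inj.
    rewrite orbT row2A /=; last lia.
    by rewrite hv; lia.
  - rewrite orbF.
    case: (boolP (x \in A)) => hA //=.
    case: (Hq x) => [h|[[h1 h2]|[h1 h2]]].
    + have -> : q x = x by apply/val_inj.
      by rewrite eqxx andbF orbF.
    + rewrite h1 /= (_ : q x != x) ?orbT; last by apply/eqP => /(congr1 (@nat_of_ord n)); lia.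
      by rewrite h2; lia.
    +
      exfalso; move/negP: hxV; apply.
      apply/imsetP; exists (q x); last first.
        apply/val_inj => /=.
        case: (Hq (q x)) => [h|[[_ h]|[h _]]]; last lia.
        * have : q (q x) = q x by apply/val_inj.
          by move/perm_inj => e; move: h2; rewrite e; lia.
        * by rewrite h; lia.
      rewrite inE; apply/andP; split; first lia.
      apply/eqP => /(congr1 (@nat_of_ord n)) h.
      have := qinj _ _ h => e; move: h2; rewrite -e; lia.
have Dis : [disjoint B & q @: V].
  rewrite -setI_eq0; apply/eqP/setP => x; rewrite !inE.
  apply/negP => /andP [/andP [_ hqx] /imsetP [y]]; rewrite inE => /andP [hy hqy] hxy.
  have hv : nat_of_ord (q y) = y + (n - k).
    case: (Hq y) => [h|[[_ h]|[h _]]] //; last lia.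
    by case/eqP: hqy; apply/val_inj.
  move: hqx; rewrite hxy.
  case: (Hq (q y)) => [h|[[h1 _]|[_ h]]].
  - by move/val_inj/perm_inj: h => e; move: hv; rewrite e; lia.
  - lia.
  - have hqq := ltn_ord (q (q y)). move: h; rewrite hv => h. lia.
have EW : #|Wset m k p q| = #|A :\: X|.
  rewrite -(card_imset _ (@perm_inj _ p)); suff -> : p @: Wset m k p q = A :\: X by [].
  apply/setP => x; rewrite !inE; apply/imsetP/andP.
    case=> y; rewrite !inE => /andP [hy hny] ->; split => //; by apply: imset_f; rewrite /O inE.
  case=> hnx /imsetP [y hy hxy]; exists y => //; rewrite !inE; move: hy; rewrite /O inE => ->; by rewrite -hxy.
have cB : #|B| + #|V| = #|A :&: X|.
  by rewrite E2 cardsU (disjoint_setI0 Dis) cards0 subn0 card_imset //; exact: perm_inj.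
have cA : #|A| = m by rewrite card_imset ?card_Omega //; [lia | exact: perm_inj].
have := cardsID X A; rewrite -cB -EW cA.
rewrite E1 card_imset; last exact: perm_inj.
lia.
Qed.
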